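(* Let $H\supseteq\mathbb R$ be a Hardy field with $\partial(H)=H$ (every element of $H$ is the derivative of an element of $H$), and let $K=H[i]\subseteq\mathcal C^{<\infty}[i]$. The following are equivalent: (i) $\operatorname{I}(K)\subseteq K^\dagger$; (ii) $e^f\in K$ for all $f\in K$ with $f\prec1$; (iii) $e^\phi,\cos\phi,\sin\phi\in H$ for all $\phi\in H$ with $\phi\prec1$.
   Context: $\mathcal C^{<\infty}$ is the ring of germs at $+\infty$ of real functions that are $n$-times continuously differentiable for every $n$ (on some interval $(a,+\infty)$, $a$ depending on $n$... i.e. $\bigcap_n\mathcal C^n$), and $\mathcal C^{<\infty}[i]=\mathcal C^{<\infty}+\mathcal C^{<\infty}i$ its complexification, with derivation $(g+hi)'=g'+h'i$. A Hardy field is a subfield of $\mathcal C^{<\infty}$ closed under derivation. For complex germs, $f\preceq g$ iff $|f|\le c|g|$ eventually for some $c>0$; $f\prec g$ iff $g(t)\ne0$ eventually and $f(t)/g(t)\to0$. $\mathcal O_K=\{f\in K:f\preceq1\}$; $\operatorname{I}(K)$ is the $\mathcal O_K$-submodule of $K$ generated by $\{f':f\in\mathcal O_K\}$; $K^\dagger=\{f'/f:f\in K^\times\}$. *)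

(* Defs.v *)
From Stdlib Require Import Reals List.
From Coquelicot Require Import Coquelicot.
Open Scope R_scope.

(* Germs at +oo are represented by functions R -> R (resp. R -> C);
   properties of germs are stated "eventually", i.e. on some (a,+oo). *)
Definition eventually_at_pinfty (P : R -> Prop) : Prop :=
  exists a : R, forall t : R, a < t -> P t.

Definition ev_eq {T : Type} (f g : R -> T) : Prop :=
  eventually_at_pinfty (fun t => f t = g t).

Definition Cinf (f : R -> R) : Prop :=
  forall n : nat, exists a : R, forall t : R, a < t ->
    (forall k : nat, (k <= n)%nat -> ex_derive_n f k t) /\
    continuous (Derive_n f n) t.

(* A Hardy field, as a set of germs: a set of functions saturated under
   eventual equality, consisting of C^{<oo} germs, which is a subfield of
   the ring of germs C^{<oo} and is closed under derivation. *)
Definition hardy_field (H : (R -> R) -> Prop) : Prop :=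
  (forall f g, H f -> ev_eq f g -> H g) /\
  (forall f, H f -> Cinf f) /\
  H (fun _ => 0) /\ H (fun _ => 1) /\
  (forall f g, H f -> H g -> H (fun t => f t + g t)) /\
  (forall f, H f -> H (fun t => - f t)) /\
  (forall f g, H f -> H g -> H (fun t => f t * g t)) /\
  (forall f, H f -> ~ ev_eq f (fun _ => 0) ->
     exists g, H g /\ ev_eq (fun t => f t * g t) (fun _ => 1)) /\
  (forall f, H f -> H (Derive f)).

(* K = H[i] : complex germs g + h i with g, h in H *)
Definition inK (H : (R -> R) -> Prop) (f : R -> C) : Prop :=
  H (fun t => fst (f t)) /\ H (fun t => snd (f t)).

Definition cderiv (f : R -> C) : R -> C :=
  fun t => (Derive (fun s => fst (f s)) t, Derive (fun s => snd (f s)) t).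

Definition cpreceq (f g : R -> C) : Prop :=
  exists c : R, 0 < c /\
    eventually_at_pinfty (fun t => Cmod (f t) <= c * Cmod (g t)).

Definition cprec1 (f : R -> C) : Prop :=
  forall eps : R, 0 < eps -> eventually_at_pinfty (fun t => Cmod (f t) < eps).

Definition rprec1 (f : R -> R) : Prop :=
  forall eps : R, 0 < eps -> eventually_at_pinfty (fun t => Rabs (f t) < eps).

Definition inOK (H : (R -> R) -> Prop) (f : R -> C) : Prop :=
  inK H f /\ cpreceq f (fun _ => RtoC 1).

(* I(K) : the O_K-submodule of K generated by { f' : f in O_K }, i.e. the
   germs of finite sums  sum_j a_j * f_j'  with a_j, f_j in O_K *)
Definition inIK (H : (R -> R) -> Prop) (g : R -> C) : Prop :=
  exists l : list ((R -> C) * (R -> C)),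
    (forall p, In p l -> inOK H (fst p) /\ inOK H (snd p)) /\
    ev_eq g (fun t => fold_right Cplus (RtoC 0)
                        (map (fun p => Cmult (fst p t) (cderiv (snd p) t)) l)).

Definition inKdagger (H : (R -> R) -> Prop) (g : R -> C) : Prop :=
  exists f : R -> C, inK H f /\ ~ ev_eq f (fun _ => RtoC 0) /\
    ev_eq g (fun t => Cdiv (cderiv f t) (f t)).

Definition cexp (z : C) : C :=
  (exp (fst z) * cos (snd z), exp (fst z) * sin (snd z)).

(* Main.v *)
Require Import Defs.
From Stdlib Require Import Reals List Lra Classical.
From Coquelicot Require Import Coquelicot.
Open Scope R_scope.

Lemma ev_and (P Q : R -> Prop) : eventually_at_pinfty P -> eventually_at_pinfty Q ->
  eventually_at_pinfty (fun t => P t /\ Q t).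
Proof.
  intros [a Ha] [b Hb]. exists (Rmax a b). intros t Ht. split.
  - apply Ha. eapply Rle_lt_trans; [apply Rmax_l|exact Ht].
  - apply Hb. eapply Rle_lt_trans; [apply Rmax_r|exact Ht].
Qed.

Lemma ev_mono (P Q : R -> Prop) : (forall t, P t -> Q t) ->
  eventually_at_pinfty P -> eventually_at_pinfty Q.
Proof. intros HPQ [a Ha]. exists a. intros t Ht. apply HPQ, Ha, Ht. Qed.

Lemma ev_all (P : R -> Prop) : (forall t, P t) -> eventually_at_pinfty P.
Proof. intros HP. exists 0. intros t _. apply HP. Qed.

Lemma cont_of_deriv f t l : is_derive f t l -> continuity_pt f t.
Proof. intro H. apply continuity_pt_filterlim. exact (@ex_derive_continuous R_AbsRing R_NormedModule f t (ex_intro _ l H)). Qed.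

Lemma mono_le (f df : R -> R) a :
  (forall t, a < t -> is_derive f t (df t)) -> (forall t, a < t -> 0 <= df t) ->
  forall x y, a < x -> x <= y -> f x <= f y.
Proof.
  intros Hd Hp x y Hx Hxy.
  destruct (Req_dec x y) as [->|Hne]; [lra|].
  destruct (MVT_gen f x y df) as [c [Hc Heq]].
  - intros z Hz. apply Hd. rewrite Rmin_left in Hz by lra. lra.
  - intros z Hz. apply (cont_of_deriv f z (df z)). apply Hd. rewrite Rmin_left in Hz by lra. lra.
  - rewrite Rmin_left in Hc by lra. rewrite Rmax_right in Hc by lra.
    assert (0 <= df c) by (apply Hp; lra). nra.
Qed.

Lemma cmp_bound F G u v a :
  (forall t, a < t -> is_derive F t (u t)) -> (forall t, a < t -> is_derive G t (v t)) ->
  (forall t, a < t -> Rabs (u t) <= v t) ->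
  forall x y, a < x -> x <= y -> Rabs (F y - F x) <= G y - G x.
Proof.
  intros HF HG Huv x y Hx Hxy.
  assert (H1 : G x - F x <= G y - F y).
  { apply (mono_le (fun t => G t - F t) (fun t => v t - u t) a); auto.
    - intros t Ht. apply (is_derive_minus G F t (v t) (u t)); auto.
    - intros t Ht. specialize (Huv t Ht). apply Rabs_le_between in Huv. lra. }
  assert (H2 : G x + F x <= G y + F y).
  { apply (mono_le (fun t => G t + F t) (fun t => v t + u t) a); auto.
    - intros t Ht. apply (is_derive_plus G F t (v t) (u t)); auto.
    - intros t Ht. specialize (Huv t Ht). apply Rabs_le_between in Huv. lra. }
  apply Rabs_le. lra.
Qed.

Lemma const_deriv0 (f : R -> R) a :
  (forall t, a < t -> is_derive f t 0) -> forall x y, a < x -> x <= y -> f y = f x.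
Proof.
  intros Hd x y Hx Hxy.
  assert (f x <= f y) by (apply (mono_le f (fun _ => 0) a); auto; intros; lra).
  assert (- f x <= - f y).
  { apply (mono_le (fun t => - f t) (fun _ => 0) a); auto; [|intros; lra].
    intros t Ht. replace 0 with (opp 0 : R) by (compute; lra). apply (is_derive_opp f t 0). auto. }
  lra.
Qed.

Lemma Cmod_le_sum z : Cmod z <= Rabs (fst z) + Rabs (snd z).
Proof.
  unfold Cmod. rewrite <- (sqrt_Rsqr (Rabs (fst z) + Rabs (snd z))).
  2: { pose proof (Rabs_pos (fst z)); pose proof (Rabs_pos (snd z)); lra. }
  apply sqrt_le_1_alt. rewrite <- (pow2_abs (fst z)), <- (pow2_abs (snd z)). unfold Rsqr.
  pose proof (Rabs_pos (fst z)); pose proof (Rabs_pos (snd z)). nra.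
Qed.

Lemma fst_le_Cmod z : Rabs (fst z) <= Cmod z.
Proof. eapply Rle_trans; [apply Rmax_l|apply Rmax_Cmod]. Qed.
Lemma snd_le_Cmod z : Rabs (snd z) <= Cmod z.
Proof. eapply Rle_trans; [apply Rmax_r|apply Rmax_Cmod]. Qed.

Section Hardy.
Variable H : (R -> R) -> Prop.
Hypothesis HH : hardy_field H.

Lemma H_sat f g : H f -> ev_eq f g -> H g.
Proof. destruct HH as (Hs&_). apply Hs. Qed.

Lemma H_deriv h : H h -> eventually_at_pinfty (fun t => is_derive h t (Derive h t)).
Proof.
  intro Hh. destruct HH as (_&HC&_). destruct (HC h Hh 1%nat) as [a Ha]. exists a.
  intros t Ht. destruct (Ha t Ht) as [Hk _]. apply Derive_correct. exact (Hk 1%nat (le_n 1)).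
Qed.

Lemma H_cont h : H h -> eventually_at_pinfty (fun t => continuity_pt h t).
Proof.
  intro Hh. destruct HH as (_&HC&_). destruct (HC h Hh 0%nat) as [a Ha]. exists a.
  intros t Ht. destruct (Ha t Ht) as [_ Hc]. apply continuity_pt_filterlim. exact Hc.
Qed.

Lemma pos_helper f a : (forall t, a < t -> f t <> 0 /\ continuity_pt f t) -> 0 < f (a+1) ->
  forall t, a < t -> 0 < f t.
Proof.
  intros Hf Hp t Ht. destruct (Rlt_or_le 0 (f t)) as [|Hle]; auto. exfalso.
  assert (Hn : f t < 0) by (destruct (Hf t Ht) as [Hz _]; destruct Hle; [auto|contradiction]).
  destruct (Rtotal_order t (a+1)) as [Hlt|[Heq|Hgt]].
  - destruct (Ranalysis5.IVT_interv f t (a+1)) as [z [Hz Hz0]]; auto.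
    + intros b Hb. apply Hf. lra.
    + apply (proj1 (Hf z ltac:(lra))). auto.
  - subst. lra.
  - destruct (Ranalysis5.IVT_interv (fun s => - f s) (a+1) t) as [z [Hz Hz0]]; auto.
    + intros b Hb. apply continuity_pt_opp. apply Hf. lra.
    + lra.
    + lra.
    + apply (proj1 (Hf z ltac:(lra))). lra.
Qed.

Lemma H_sign h : H h ->
  ev_eq h (fun _ => 0) \/ eventually_at_pinfty (fun t => 0 < h t) \/
  eventually_at_pinfty (fun t => h t < 0).
Proof.
  intro Hh. destruct (classic (ev_eq h (fun _ => 0))) as [|Hnz]; [left; auto|right].
  destruct HH as (_&_&_&_&_&_&_&Hinv&_).
  destruct (Hinv h Hh Hnz) as [g [_ Hg]].
  destruct (ev_and _ _ Hg (H_cont h Hh)) as [a Ha].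
  assert (Hf : forall t, a < t -> h t <> 0 /\ continuity_pt h t).
  { intros t Ht. destruct (Ha t Ht) as [E C]. split; auto. intro Z. rewrite Z in E. lra. }
  destruct (Rtotal_order (h (a+1)) 0) as [Hl|[He|Hg']].
  - right. exists a. intros t Ht.
    assert (0 < - h t); [|lra].
    apply (pos_helper (fun s => - h s) a); auto; [|lra].
    intros s Hs. destruct (Hf s Hs). split; [lra|]. apply continuity_pt_opp; auto.
  - exfalso. apply (proj1 (Hf (a+1) ltac:(lra))). auto.
  - left. exists a. apply pos_helper; auto.
Qed.

Lemma H_mono h : H h -> exists s a, (s = 1 \/ s = -1) /\
  forall t, a < t -> is_derive h t (Derive h t) /\ 0 <= s * Derive h t.
Proof.
  intro Hh. assert (Hd : H (Derive h)) by (destruct HH as (_&_&_&_&_&_&_&_&D); auto).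
  destruct (H_sign _ Hd) as [E|[P|N]].
  - destruct (ev_and _ _ E (H_deriv h Hh)) as [a Ha]. exists 1, a. split; auto.
    intros t Ht. destruct (Ha t Ht) as [E1 D]. split; auto. rewrite E1. lra.
  - destruct (ev_and _ _ P (H_deriv h Hh)) as [a Ha]. exists 1, a. split; auto.
    intros t Ht. destruct (Ha t Ht) as [E1 D]. split; auto. lra.
  - destruct (ev_and _ _ N (H_deriv h Hh)) as [a Ha]. exists (-1), a. split; auto.
    intros t Ht. destruct (Ha t Ht) as [E1 D]. split; auto. lra.
Qed.

Lemma incr_lim (g : R -> R) a M :
  (forall x y, a < x -> x <= y -> g x <= g y) -> (forall t, a < t -> Rabs (g t) <= M) ->
  exists c, forall eps, 0 < eps -> eventually_at_pinfty (fun t => Rabs (g t - c) < eps).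
Proof.
  intros Hm Hb.
  destruct (completeness (fun y => exists t, a < t /\ y = g t)) as [c [Hub Hl]].
  - exists M. intros y [t [Ht ->]]. specialize (Hb t Ht). apply Rabs_le_between in Hb. lra.
  - exists (g (a+1)), (a+1). split; auto; lra.
  - exists c. intros eps He.
    destruct (classic (exists t, a < t /\ c - eps < g t)) as [[t1 [Ht1 Hg1]]|Hno].
    + exists t1. intros t Ht. assert (g t1 <= g t) by (apply Hm; lra).
      assert (g t <= c) by (apply Hub; exists t; split; auto; lra).
      apply Rabs_lt_between. lra.
    + exfalso. assert (c <= c - eps); [|lra].
      apply Hl. intros y [t [Ht ->]]. destruct (Rle_or_lt (g t) (c - eps)); auto.
      exfalso. apply Hno. exists t. auto.
Qed.

Lemma H_lim h : H h -> (exists M, eventually_at_pinfty (fun t => Rabs (h t) <= M)) ->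
  exists c, rprec1 (fun t => h t - c).
Proof.
  intros Hh [M [b Hb]]. destruct (H_mono h Hh) as [s [a [Hs Ha]]].
  destruct (incr_lim (fun t => s * h t) (Rmax a b) M) as [c Hc].
  - intros x y Hx Hxy. apply (mono_le (fun t => s * h t) (fun t => s * Derive h t) a); auto.
    + intros t Ht. apply is_derive_scal. apply Ha; auto.
    + intros t Ht. apply Ha; auto.
    + eapply Rle_lt_trans; [apply Rmax_l|exact Hx].
  - intros t Ht. rewrite Rabs_mult. assert (Rabs s = 1) by (destruct Hs; subst; unfold Rabs; destruct Rcase_abs; lra).
    rewrite H0, Rmult_1_l. apply Hb. eapply Rle_lt_trans; [apply Rmax_r|exact Ht].
  - exists (s * c). intros eps He. destruct (Hc eps He) as [T HT]. exists T. intros t Ht.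
    specialize (HT t Ht). destruct Hs; subst.
    + replace (h t - 1 * c) with (1 * h t - c) by ring. auto.
    + replace (h t - -1 * c) with (- (-1 * h t - c)) by ring. rewrite Rabs_Ropp. auto.
Qed.

End Hardy.

Section Good.
Variable H : (R -> R) -> Prop.
Hypothesis HH : hardy_field H.
Hypothesis Hreal : forall c : R, H (fun _ => c).
Hypothesis Hint : forall f, H f -> exists g, H g /\ ev_eq (Derive g) f.

Definition Good (u : R -> R) := exists F, H F /\
  eventually_at_pinfty (fun t => is_derive F t (u t)) /\
  exists M, eventually_at_pinfty (fun t => Rabs (F t) <= M).

Lemma Good_ext u v : Good u -> (forall t, u t = v t) -> Good v.
Proof.
  intros [F [HF [Hd Hb]]] E. exists F. split; auto. split; auto.
  eapply ev_mono; [|exact Hd]. intros t Ht. rewrite <- E. auto.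
Qed.

Lemma Good_0 : Good (fun _ => 0).
Proof.
  exists (fun _ => 0). split; auto. split.
  - apply ev_all. intro t. apply (is_derive_const (K:=R_AbsRing) (V:=R_NormedModule)).
  - exists 0. apply ev_all. intro. rewrite Rabs_R0. lra.
Qed.

Lemma Good_add u v : Good u -> Good v -> Good (fun t => u t + v t).
Proof.
  intros [F [HF [Hd [M Hb]]]] [G [HG [Hd' [M' Hb']]]].
  destruct HH as (_&_&_&_&Hadd&_).
  exists (fun t => F t + G t). split; auto. split.
  - eapply ev_mono; [|exact (ev_and _ _ Hd Hd')]. intros t [A B].
    apply (is_derive_plus F G t (u t) (v t)); auto.
  - exists (M + M'). eapply ev_mono; [|exact (ev_and _ _ Hb Hb')]. intros t [A B].
    eapply Rle_trans; [apply Rabs_triang|lra].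
Qed.

Lemma Good_opp u : Good u -> Good (fun t => - u t).
Proof.
  intros [F [HF [Hd [M Hb]]]].
  destruct HH as (_&_&_&_&_&Hopp&_).
  exists (fun t => - F t). split; auto. split.
  - eapply ev_mono; [|exact Hd]. intros t A. apply (is_derive_opp F t (u t)); auto.
  - exists M. eapply ev_mono; [|exact Hb]. intros t A. rewrite Rabs_Ropp. auto.
Qed.

Lemma Good_prod a b A B : H a -> H b ->
  eventually_at_pinfty (fun t => Rabs (a t) <= A) ->
  eventually_at_pinfty (fun t => Rabs (b t) <= B) ->
  Good (fun t => a t * Derive b t).
Proof.
  intros Ha Hb HA HB.
  destruct HH as (_&_&_&_&_&_&Hmul&_&Hder).
  destruct (Hint (fun t => a t * Derive b t)) as [F [HF HFd]]; auto.
  destruct (H_mono H HH b Hb) as [s [a0 [Hs Hm]]].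
  assert (Hall := ev_and _ _ (ev_and _ _ (ev_and _ _ HA HB) HFd) (H_deriv H HH F HF)).
  destruct Hall as [T HT].
  set (T' := Rmax T a0).
  assert (HT' : forall t, T' < t -> ((Rabs (a t) <= A /\ Rabs (b t) <= B) /\
     Derive F t = a t * Derive b t) /\ is_derive F t (Derive F t)).
  { intros t Ht. apply HT. eapply Rle_lt_trans; [apply Rmax_l|exact Ht]. }
  assert (Hm' : forall t, T' < t -> is_derive b t (Derive b t) /\ 0 <= s * Derive b t).
  { intros t Ht. apply Hm. eapply Rle_lt_trans; [apply Rmax_r|exact Ht]. }
  assert (Hs1 : Rabs s = 1) by (destruct Hs; subst; unfold Rabs; destruct Rcase_abs; lra).
  assert (Hcmp := cmp_bound F (fun t => A * s * b t) (fun t => a t * Derive b t)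
     (fun t => A * s * Derive b t) T').
  exists F. split; auto. split.
  - exists T'. intros t Ht. destruct (HT' t Ht) as [[_ E] D]. rewrite <- E. auto.
  - exists (Rabs (F (T'+1)) + A * (2 * B)). exists (T'+1). intros y Hy.
    assert (Hb' : Rabs (F y - F (T'+1)) <= A * s * b y - A * s * b (T'+1)).
    { apply Hcmp; try lra.
      - intros t Ht. destruct (HT' t Ht) as [[_ E] D]. rewrite <- E. auto.
      - intros t Ht. apply is_derive_scal. apply Hm'; auto.
      - intros t Ht. destruct (HT' t Ht) as [[[Ha1 _] _] _]. destruct (Hm' t Ht) as [_ P].
        rewrite Rabs_mult.
        assert (Rabs (Derive b t) = s * Derive b t).
        { rewrite <- (Rmult_1_l (Rabs (Derive b t))), <- Hs1, <- Rabs_mult. apply Rabs_pos_eq; auto. }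
        rewrite H0. rewrite Rmult_assoc. apply Rmult_le_compat_r; auto. }
    destruct (HT' y ltac:(lra)) as [[[Ha1 Hb1] _] _].
    destruct (HT' (T'+1) ltac:(lra)) as [[[Ha2 Hb2] _] _].
    assert (0 <= A) by (eapply Rle_trans; [apply Rabs_pos|exact Ha1]).
    assert (s * (b y - b (T'+1)) <= 2 * B).
    { eapply Rle_trans; [apply Rle_abs|]. rewrite Rabs_mult, Hs1, Rmult_1_l.
      eapply Rle_trans; [apply Rabs_triang|]. rewrite Rabs_Ropp. lra. }
    assert (A * s * b y - A * s * b (T' + 1) <= A * (2 * B)).
    { replace (A * s * b y - A * s * b (T' + 1)) with (A * (s * (b y - b (T'+1)))) by ring.
      apply Rmult_le_compat_l; auto. }
    replace (F y) with (F (T'+1) + (F y - F (T'+1))) by ring.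
    eapply Rle_trans; [apply Rabs_triang|]. lra.
Qed.

End Good.

Section Main.
Variable H : (R -> R) -> Prop.
Hypothesis HH : hardy_field H.
Hypothesis Hreal : forall c : R, H (fun _ => c).
Hypothesis Hint : forall f, H f -> exists g, H g /\ ev_eq (Derive g) f.

Lemma OK_bounds a : inOK H a -> H (fun t => fst (a t)) /\ H (fun t => snd (a t)) /\
  exists A, eventually_at_pinfty (fun t => Rabs (fst (a t)) <= A) /\
            eventually_at_pinfty (fun t => Rabs (snd (a t)) <= A).
Proof.
  intros [[H1 H2] [c [Hc Hb]]]. split; auto. split; auto. exists c. rewrite Cmod_1 in Hb.
  split; eapply ev_mono; try exact Hb; intros t Ht; rewrite Rmult_1_r in Ht;
  eapply Rle_trans; try exact Ht; [apply fst_le_Cmod|apply snd_le_Cmod].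
Qed.

Definition IKsum (l : list ((R -> C) * (R -> C))) :=
  fun t => fold_right Cplus (RtoC 0) (map (fun p => Cmult (fst p t) (cderiv (snd p) t)) l).

Lemma IK_good l : (forall p, In p l -> inOK H (fst p) /\ inOK H (snd p)) ->
  Good H (fun t => fst (IKsum l t)) /\ Good H (fun t => snd (IKsum l t)).
Proof.
  induction l as [|[a b] l IH]; intros Hl.
  - split; eapply Good_ext; try apply Good_0; auto; intro t; reflexivity.
  - destruct IH as [IH1 IH2]. { intros p Hp. apply Hl. right. auto. }
    destruct (Hl (a,b) (or_introl eq_refl)) as [Ha Hb]. simpl in Ha, Hb.
    destruct (OK_bounds a Ha) as (Ha1 & Ha2 & A & HA1 & HA2).
    destruct (OK_bounds b Hb) as (Hb1 & Hb2 & B & HB1 & HB2).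
    assert (G11 := Good_prod H HH Hint _ _ _ _ Ha1 Hb1 HA1 HB1).
    assert (G12 := Good_prod H HH Hint _ _ _ _ Ha1 Hb2 HA1 HB2).
    assert (G21 := Good_prod H HH Hint _ _ _ _ Ha2 Hb1 HA2 HB1).
    assert (G22 := Good_prod H HH Hint _ _ _ _ Ha2 Hb2 HA2 HB2).
    split.
    + eapply Good_ext.
      apply (Good_add H HH _ _ (Good_add H HH _ _ G11 (Good_opp H HH _ G22)) IH1).
      intro t. unfold IKsum. simpl. unfold cderiv. simpl. ring.
    + eapply Good_ext.
      apply (Good_add H HH _ _ (Good_add H HH _ _ G12 G21) IH2).
      intro t. unfold IKsum. simpl. unfold cderiv. simpl. ring.
Qed.

End Main.

Lemma cexp_nz z : cexp z <> RtoC 0.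
Proof.
  intro Z. unfold cexp in Z. pose proof (f_equal fst Z) as Z1. pose proof (f_equal snd Z) as Z2.
  simpl in Z1, Z2. pose proof (exp_pos (fst z)). pose proof (sin2_cos2 (snd z)).
  assert (cos (snd z) = 0). { apply (Rmult_eq_reg_l (exp (fst z))); lra. }
  assert (sin (snd z) = 0). { apply (Rmult_eq_reg_l (exp (fst z))); lra. }
  rewrite H1, H2 in H0. unfold Rsqr in H0. lra.
Qed.

Lemma der_ec (F1 F2 : R -> R) c1 c2 t d1 d2 : is_derive F1 t d1 -> is_derive F2 t d2 ->
  Derive (fun s => exp (F1 s - c1) * cos (F2 s - c2)) t =
  d1 * (exp (F1 t - c1) * cos (F2 t - c2)) - d2 * (exp (F1 t - c1) * sin (F2 t - c2)).
Proof.
  intros D1 D2. apply is_derive_unique. auto_derive.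
  - split; [exists d1; auto|split; [exists d2; auto|auto]].
  - replace (Derive (fun x => F1 x) t) with d1 by (symmetry; apply is_derive_unique; exact D1).
    replace (Derive (fun x => F2 x) t) with d2 by (symmetry; apply is_derive_unique; exact D2).
    unfold Rminus. ring.
Qed.

Lemma der_es (F1 F2 : R -> R) c1 c2 t d1 d2 : is_derive F1 t d1 -> is_derive F2 t d2 ->
  Derive (fun s => exp (F1 s - c1) * sin (F2 s - c2)) t =
  d1 * (exp (F1 t - c1) * sin (F2 t - c2)) + d2 * (exp (F1 t - c1) * cos (F2 t - c2)).
Proof.
  intros D1 D2. apply is_derive_unique. auto_derive.
  - split; [exists d1; auto|split; [exists d2; auto|auto]].
  - replace (Derive (fun x => F1 x) t) with d1 by (symmetry; apply is_derive_unique; exact D1).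
    replace (Derive (fun x => F2 x) t) with d2 by (symmetry; apply is_derive_unique; exact D2).
    unfold Rminus. ring.
Qed.

Section Main2.
Variable H : (R -> R) -> Prop.
Hypothesis HH : hardy_field H.
Hypothesis Hreal : forall c : R, H (fun _ => c).
Hypothesis Hint : forall f, H f -> exists g, H g /\ ev_eq (Derive g) f.

Lemma H_subc F c : H F -> H (fun t => F t - c).
Proof.
  intro HF. destruct HH as (_&_&_&_&Hadd&Hopp&_).
  exact (Hadd F (fun t => - (fun _ => c) t) HF (Hopp _ (Hreal c))).
Qed.

Lemma ii_to_i : (forall f, inK H f -> cprec1 f -> inK H (fun t => cexp (f t))) ->
  forall g, inIK H g -> inKdagger H g.
Proof.
  intros Hii g [l [Hl Heq]].
  destruct (IK_good H HH Hreal Hint l Hl) as [[F1 [HF1 [Hd1 Hb1]]] [F2 [HF2 [Hd2 Hb2]]]].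
  destruct (H_lim H HH F1 HF1 Hb1) as [c1 Hc1].
  destruct (H_lim H HH F2 HF2 Hb2) as [c2 Hc2].
  set (f := fun t => (F1 t - c1, F2 t - c2) : C).
  assert (HK : inK H f) by (split; apply H_subc; auto).
  assert (Hp : cprec1 f).
  { intros eps He. eapply ev_mono; [|exact (ev_and _ _ (Hc1 (eps/2) ltac:(lra)) (Hc2 (eps/2) ltac:(lra)))].
    intros t [A B]. eapply Rle_lt_trans; [apply Cmod_le_sum|]. simpl. lra. }
  specialize (Hii f HK Hp).
  exists (fun t => cexp (f t)). split; auto. split.
  - intros [a Ha]. apply (cexp_nz (f (a+1))). apply Ha. lra.
  - eapply ev_mono; [|exact (ev_and _ _ Heq (ev_and _ _ Hd1 Hd2))].
    intros t [E [D1 D2]].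
    assert (Hc : cderiv (fun t => cexp (f t)) t = Cmult (g t) (cexp (f t))).
    { rewrite E. unfold cderiv, f, cexp. simpl.
      rewrite (der_ec F1 F2 c1 c2 t _ _ D1 D2), (der_es F1 F2 c1 c2 t _ _ D1 D2).
      unfold IKsum. apply injective_projections; simpl; unfold cderiv; ring. }
    unfold Cdiv. rewrite Hc, <- Cmult_assoc, Cinv_r, Cmult_1_r; auto. apply cexp_nz.
Qed.

End Main2.

Lemma der_w1 (Y1 Y2 F1 F2 : R -> R) t dy1 dy2 df1 df2 :
  is_derive Y1 t dy1 -> is_derive Y2 t dy2 -> is_derive F1 t df1 -> is_derive F2 t df2 ->
  dy1 = df1 * Y1 t - df2 * Y2 t -> dy2 = df1 * Y2 t + df2 * Y1 t ->
  is_derive (fun s => exp (- F1 s) * (Y1 s * cos (F2 s) + Y2 s * sin (F2 s))) t 0.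
Proof.
  intros D1 D2 D3 D4 E1 E2. auto_derive.
  - repeat split; eexists; eauto.
  - replace (Derive (fun x => Y1 x) t) with dy1 by (symmetry; apply is_derive_unique; exact D1).
    replace (Derive (fun x => Y2 x) t) with dy2 by (symmetry; apply is_derive_unique; exact D2).
    replace (Derive (fun x => F1 x) t) with df1 by (symmetry; apply is_derive_unique; exact D3).
    replace (Derive (fun x => F2 x) t) with df2 by (symmetry; apply is_derive_unique; exact D4).
    subst. ring.
Qed.

Lemma der_w2 (Y1 Y2 F1 F2 : R -> R) t dy1 dy2 df1 df2 :
  is_derive Y1 t dy1 -> is_derive Y2 t dy2 -> is_derive F1 t df1 -> is_derive F2 t df2 ->
  dy1 = df1 * Y1 t - df2 * Y2 t -> dy2 = df1 * Y2 t + df2 * Y1 t ->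
  is_derive (fun s => exp (- F1 s) * (Y2 s * cos (F2 s) - Y1 s * sin (F2 s))) t 0.
Proof.
  intros D1 D2 D3 D4 E1 E2. auto_derive.
  - repeat split; eexists; eauto.
  - replace (Derive (fun x => Y1 x) t) with dy1 by (symmetry; apply is_derive_unique; exact D1).
    replace (Derive (fun x => Y2 x) t) with dy2 by (symmetry; apply is_derive_unique; exact D2).
    replace (Derive (fun x => F1 x) t) with df1 by (symmetry; apply is_derive_unique; exact D3).
    replace (Derive (fun x => F2 x) t) with df2 by (symmetry; apply is_derive_unique; exact D4).
    subst. ring.
Qed.

Lemma w_id (z : C) a b :
  z = Cmult (exp (- a) * (fst z * cos b + snd z * sin b), exp (- a) * (snd z * cos b - fst z * sin b))
            (exp a * cos b, exp a * sin b).
Proof.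
  destruct z as [y1 y2]. simpl. rewrite exp_Ropp. pose proof (exp_pos a). pose proof (sin2_cos2 b).
  unfold Rsqr in H0. unfold Cmult; simpl. apply injective_projections; simpl.
  - replace (/ exp a * (y1 * cos b + y2 * sin b) * (exp a * cos b) -
      / exp a * (y2 * cos b - y1 * sin b) * (exp a * sin b)) with
      (/ exp a * exp a * (y1 * (sin b * sin b + cos b * cos b))) by ring.
    rewrite H0, Rinv_l; [ring|lra].
  - replace (/ exp a * (y1 * cos b + y2 * sin b) * (exp a * sin b) +
      / exp a * (y2 * cos b - y1 * sin b) * (exp a * cos b)) with
      (/ exp a * exp a * (y2 * (sin b * sin b + cos b * cos b))) by ring.
    rewrite H0, Rinv_l; [ring|lra].
Qed.

Section Main3.
Variable H : (R -> R) -> Prop.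
Hypothesis HH : hardy_field H.
Hypothesis Hreal : forall c : R, H (fun _ => c).

Lemma K_ev_nz y : inK H y -> ~ ev_eq y (fun _ => RtoC 0) ->
  eventually_at_pinfty (fun t => y t <> RtoC 0).
Proof.
  intros [Hy1 Hy2] Hnz.
  destruct (H_sign H HH _ Hy1) as [Z1|[P1|N1]].
  - destruct (H_sign H HH _ Hy2) as [Z2|[P2|N2]].
    + exfalso. apply Hnz. eapply ev_mono; [|exact (ev_and _ _ Z1 Z2)].
      intros t [A B]. apply injective_projections; simpl; auto.
    + eapply ev_mono; [|exact P2]. intros t A Z. cbv beta in A. rewrite Z in A. simpl in A. lra.
    + eapply ev_mono; [|exact N2]. intros t A Z. cbv beta in A. rewrite Z in A. simpl in A. lra.
  - eapply ev_mono; [|exact P1]. intros t A Z. cbv beta in A. rewrite Z in A. simpl in A. lra.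
  - eapply ev_mono; [|exact N1]. intros t A Z. cbv beta in A. rewrite Z in A. simpl in A. lra.
Qed.

Lemma i_to_ii : (forall g, inIK H g -> inKdagger H g) ->
  forall f, inK H f -> cprec1 f -> inK H (fun t => cexp (f t)).
Proof.
  intros Hi f Hf Hp.
  assert (OKf : inOK H f).
  { split; auto. exists 1. split; [lra|]. eapply ev_mono; [|exact (Hp 1 ltac:(lra))].
    intros t A. rewrite Cmod_1. lra. }
  assert (OK1 : inOK H (fun _ => RtoC 1)).
  { split; [split; apply Hreal|]. exists 1. split; [lra|]. apply ev_all. intro. lra. }
  assert (IK : inIK H (cderiv f)).
  { exists (((fun _ => RtoC 1), f) :: nil). split.
    - intros p [<-|[]]. simpl. auto.
    - apply ev_all. intro t. simpl. rewrite Cmult_1_l, Cplus_0_r. reflexivity. }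
  destruct (Hi _ IK) as [y [Hy [Hnz Hq]]].
  destruct Hy as [Hy1 Hy2]. destruct Hf as [Hf1 Hf2].
  assert (Hall := ev_and _ _ (ev_and _ _ (K_ev_nz y (conj Hy1 Hy2) Hnz) Hq)
     (ev_and _ _ (ev_and _ _ (H_deriv H HH _ Hy1) (H_deriv H HH _ Hy2))
                 (ev_and _ _ (H_deriv H HH _ Hf1) (H_deriv H HH _ Hf2)))).
  destruct Hall as [T HT].
  set (w1 := fun s => exp (- fst (f s)) * (fst (y s) * cos (snd (f s)) + snd (y s) * sin (snd (f s)))).
  set (w2 := fun s => exp (- fst (f s)) * (snd (y s) * cos (snd (f s)) - fst (y s) * sin (snd (f s)))).
  assert (Hw : forall t, T < t -> is_derive w1 t 0 /\ is_derive w2 t 0).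
  { intros t Ht. destruct (HT t Ht) as [[Nz Q] [[D1 D2] [D3 D4]]].
    assert (Ec : cderiv y t = Cmult (cderiv f t) (y t)).
    { rewrite Q. unfold Cdiv. rewrite <- Cmult_assoc, Cinv_l, Cmult_1_r; auto. }
    assert (E1 := f_equal fst Ec). assert (E2 := f_equal snd Ec).
    unfold cderiv in E1, E2. simpl in E1, E2.
    split.
    - exact (der_w1 _ _ _ _ t _ _ _ _ D1 D2 D3 D4 E1 E2).
    - exact (der_w2 _ _ _ _ t _ _ _ _ D1 D2 D3 D4 E1 E2). }
  set (w0 := (w1 (T+1), w2 (T+1)) : C).
  assert (Hyw : forall t, T + 1 <= t -> y t = Cmult w0 (cexp (f t))).
  { intros t Ht. transitivity (Cmult (w1 t, w2 t) (cexp (f t))).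
    { exact (w_id (y t) (fst (f t)) (snd (f t))). }
    unfold w0.
    rewrite (const_deriv0 w1 T (fun s Hs => proj1 (Hw s Hs)) (T+1) t ltac:(lra) Ht).
    rewrite (const_deriv0 w2 T (fun s Hs => proj2 (Hw s Hs)) (T+1) t ltac:(lra) Ht).
    reflexivity. }
  assert (Hw0 : w0 <> RtoC 0).
  { intro Z. destruct (HT (T+1) ltac:(lra)) as [[Nz _] _]. apply Nz.
    rewrite (Hyw (T+1) ltac:(lra)), Z, Cmult_0_l. reflexivity. }
  assert (He : forall t, T + 1 <= t -> cexp (f t) = Cmult (Cinv w0) (y t)).
  { intros t Ht. rewrite (Hyw t Ht), Cmult_assoc, Cinv_l, Cmult_1_l; auto. }
  pose proof HH as HH'. destruct HH' as (_&_&_&_&Hadd&Hopp&Hmul&_).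
  split.
  - apply (H_sat H HH (fun t => fst (Cinv w0) * fst (y t) + - (snd (Cinv w0) * snd (y t)))).
    + exact (Hadd _ _ (Hmul _ _ (Hreal _) Hy1) (Hopp _ (Hmul _ _ (Hreal _) Hy2))).
    + exists (T+1). intros t Ht. rewrite (He t ltac:(lra)). reflexivity.
  - apply (H_sat H HH (fun t => fst (Cinv w0) * snd (y t) + snd (Cinv w0) * fst (y t))).
    + exact (Hadd _ _ (Hmul _ _ (Hreal _) Hy2) (Hmul _ _ (Hreal _) Hy1)).
    + exists (T+1). intros t Ht. rewrite (He t ltac:(lra)). reflexivity.
Qed.

End Main3.

Section Main4.
Variable H : (R -> R) -> Prop.
Hypothesis HH : hardy_field H.
Hypothesis Hreal : forall c : R, H (fun _ => c).

Lemma ii_to_iii : (forall f, inK H f -> cprec1 f -> inK H (fun t => cexp (f t))) ->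
  forall phi, H phi -> rprec1 phi ->
      H (fun t => exp (phi t)) /\ H (fun t => cos (phi t)) /\ H (fun t => sin (phi t)).
Proof.
  intros Hii phi Hphi Hpr.
  assert (A := Hii (fun t => (phi t, 0) : C)).
  assert (B := Hii (fun t => (0, phi t) : C)).
  destruct A as [A1 _].
  { split; [exact Hphi|exact (Hreal 0)]. }
  { intros eps He. eapply ev_mono; [|exact (Hpr eps He)]. intros t Ht.
    eapply Rle_lt_trans; [apply Cmod_le_sum|]. simpl. rewrite Rabs_R0. lra. }
  destruct B as [B1 B2].
  { split; [exact (Hreal 0)|exact Hphi]. }
  { intros eps He. eapply ev_mono; [|exact (Hpr eps He)]. intros t Ht.
    eapply Rle_lt_trans; [apply Cmod_le_sum|]. simpl. rewrite Rabs_R0. lra. }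
  split; [|split].
  - eapply H_sat; [exact HH|exact A1|]. apply ev_all. intro t. simpl. rewrite cos_0. ring.
  - eapply H_sat; [exact HH|exact B1|]. apply ev_all. intro t. simpl. rewrite exp_0. ring.
  - eapply H_sat; [exact HH|exact B2|]. apply ev_all. intro t. simpl. rewrite exp_0. ring.
Qed.

Lemma iii_to_ii : (forall phi, H phi -> rprec1 phi ->
      H (fun t => exp (phi t)) /\ H (fun t => cos (phi t)) /\ H (fun t => sin (phi t))) ->
  forall f, inK H f -> cprec1 f -> inK H (fun t => cexp (f t)).
Proof.
  intros Hiii f [Hf1 Hf2] Hp.
  destruct (Hiii _ Hf1) as [E1 _].
  { intros eps He. eapply ev_mono; [|exact (Hp eps He)]. intros t Ht.
    eapply Rle_lt_trans; [apply fst_le_Cmod|exact Ht]. }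
  destruct (Hiii _ Hf2) as [_ [C2 S2]].
  { intros eps He. eapply ev_mono; [|exact (Hp eps He)]. intros t Ht.
    eapply Rle_lt_trans; [apply snd_le_Cmod|exact Ht]. }
  pose proof HH as HH'. destruct HH' as (_&_&_&_&_&_&Hmul&_).
  split.
  - exact (Hmul _ _ E1 C2).
  - exact (Hmul _ _ E1 S2).
Qed.

End Main4.

Theorem mainTheorem13 (H : (R -> R) -> Prop)
  (HH : hardy_field H)
  (Hreal : forall c : R, H (fun _ => c))
  (Hint : forall f, H f -> exists g, H g /\ ev_eq (Derive g) f) :
  ((forall g, inIK H g -> inKdagger H g) <->
   (forall f, inK H f -> cprec1 f -> inK H (fun t => cexp (f t)))) /\
  ((forall f, inK H f -> cprec1 f -> inK H (fun t => cexp (f t))) <->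
   (forall phi, H phi -> rprec1 phi ->
      H (fun t => exp (phi t)) /\ H (fun t => cos (phi t)) /\
      H (fun t => sin (phi t)))).
Proof.
  split; split.
  - apply i_to_ii; auto.
  - apply ii_to_i; auto.
  - apply ii_to_iii; auto.
  - apply iii_to_ii; auto.
Qed.
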